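(* Let $X$ be a non-empty complete computable metric space. Then $\mathsf{BCT}_X\equiv_W\mathsf{C_{\mathbb N}}$.
   Context: A represented space is a pair $(X,\delta_X)$ with $\delta_X:\subseteq\mathbb N^{\mathbb N}\to X$ a partial surjection. For a partial multi-valued map $f:\subseteq X\rightrightarrows Y$ between represented spaces, a realizer of $f$ is a partial function $F:\subseteq\mathbb N^{\mathbb N}\to\mathbb N^{\mathbb N}$ with $\delta_Y(F(p))\in f(\delta_X(p))$ for all $p\in\mathrm{dom}(f\circ\delta_X)$. We write $f\le_W g$ (Weihrauch reducibility) if there are computable partial functions $H,K:\subseteq\mathbb N^{\mathbb N}\to\mathbb N^{\mathbb N}$ such that for every realizer $G$ of $g$ the function $p\mapsto H\langle p,G(K(p))\rangle$ is a realizer of $f$, where $\langle\cdot,\cdot\rangle$ is a standard computable pairing on $\mathbb N^{\mathbb N}$. $\equiv_W$ is the induced equivalence. For a computable metric space $X$, $\mathcal A_-(X)$ is the set of closed subsets of $X$, where a name of $A$ is an enumeration of rational open balls (centers from the dense sequence, rational radii) whose union is $X\setminus A$; for $X=\mathbb N$: $p$ names $A$ iff $\mathbb N\setminus A=\{n:n+1\in\mathrm{range}(p)\}$. Sequences in $\mathcal A_-(X)^{\mathbb N}$ are represented by tupling names. $\mathsf{C_{\mathbb N}}:\subseteq\mathcal A_-(\mathbb N)\rightrightarrows\mathbb N$, $A\mapsto A$, on non-empty $A$. $\mathsf{BCT}_X:\subseteq\mathcal A_-(X)^{\mathbb N}\rightrightarrows\mathbb N$, $(A_i)_{i}\mapsto\{n\in\mathbb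 N: A_n\text{ has non-empty interior}\}$, defined on all sequences of closed sets with $\bigcup_i A_i=X$. *)

(* Defs.v *)
From Stdlib Require Import Reals List Arith Cantor.
Import ListNotations.
Open Scope R_scope.

Definition Baire := nat -> nat.

Definition cpair (x y : nat) : nat := Cantor.to_nat (x, y).

Fixpoint enc (l : list nat) : nat :=
  match l with
  | [] => 0%nat
  | x :: l' => S (cpair x (enc l'))
  end.

Definition prefix (p : Baire) (k : nat) : list nat := map p (seq 0 k).

Definition bpair (p q : Baire) : Baire :=
  fun n => if Nat.even n then p (Nat.div2 n) else q (Nat.div2 n).

Inductive code : Type :=
| Zero : code
| Succ : code
| Proj : nat -> code
| Comp : code -> list code -> code
| Prec : code -> code -> code
| Mu   : code -> code.

Inductive eval : code -> list nat -> nat -> Prop :=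
| ev_zero : forall args, eval Zero args 0
| ev_succ : forall x args, eval Succ (x :: args) (S x)
| ev_proj : forall i args x, nth_error args i = Some x -> eval (Proj i) args x
| ev_comp : forall f gs args ys y,
    evals gs args ys -> eval f ys y -> eval (Comp f gs) args y
| ev_prec0 : forall f g args y, eval f args y -> eval (Prec f g) (0%nat :: args) y
| ev_precS : forall f g n args z y,
    eval (Prec f g) (n :: args) z -> eval g (n :: z :: args) y ->
    eval (Prec f g) (S n :: args) y
| ev_mu : forall f args n,
    eval f (n :: args) 0 ->
    (forall m, (m < n)%nat -> exists k, eval f (m :: args) (S k)) ->
    eval (Mu f) args n
with evals : list code -> list nat -> list nat -> Prop :=
| evs_nil : forall args, evals [] args []
| evs_cons : forall g gs args y ys,
    eval g args y -> evals gs args ys -> evals (g :: gs) args (y :: ys).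

(** A partial function is a functional relation; its domain is the set of
    inputs having an output. *)
Definition pfun := Baire -> Baire -> Prop.
Definition functional (F : pfun) : Prop :=
  forall p q1 q2, F p q1 -> F p q2 -> q1 = q2.

(** Type-2 computability: F is computable iff there is a partial recursive
    function phi such that for every p in dom(F) with output q, for every n
    and k, phi(n, p|k) is defined and equals 0 ("no answer yet") or q(n)+1,
    and for every n some prefix p|k yields the answer q(n)+1. *)
Definition computable_pfun (F : pfun) : Prop :=
  functional F /\
  exists e : code, forall p q, F p q ->
    (forall n k, exists y, eval e [n; enc (prefix p k)] y /\
                           (y = 0%nat \/ y = S (q n))) /\
    (forall n, exists k, eval e [n; enc (prefix p k)] (S (q n))).

(** A representation of X is given as a relation [delta : Baire -> X -> Prop]
    ([delta p x] : "p is a name of x"). *)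
Record mvmap (X Y : Type) := MVMap {
  mdom : X -> Prop;
  mval : X -> Y -> Prop
}.
Arguments mdom {X Y} _ _.
Arguments mval {X Y} _ _ _.

Definition realizer {X Y : Type} (dX : Baire -> X -> Prop)
    (dY : Baire -> Y -> Prop) (f : mvmap X Y) (F : pfun) : Prop :=
  functional F /\
  forall p x, dX p x -> mdom f x ->
    exists q, F p q /\ exists y, dY q y /\ mval f x y.

Definition weihrauch_le {X Y Z W : Type}
    (dX : Baire -> X -> Prop) (dY : Baire -> Y -> Prop) (f : mvmap X Y)
    (dZ : Baire -> Z -> Prop) (dW : Baire -> W -> Prop) (g : mvmap Z W) : Prop :=
  exists H K : pfun, computable_pfun H /\ computable_pfun K /\
    forall G : pfun, realizer dZ dW g G ->
      realizer dX dY f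
        (fun p r => exists k gk, K p k /\ G k gk /\ H (bpair p gk) r).

Definition weihrauch_eq {X Y Z W : Type}
    (dX : Baire -> X -> Prop) (dY : Baire -> Y -> Prop) (f : mvmap X Y)
    (dZ : Baire -> Z -> Prop) (dW : Baire -> W -> Prop) (g : mvmap Z W) : Prop :=
  weihrauch_le dX dY f dZ dW g /\ weihrauch_le dZ dW g dX dY f.

Definition delta_nat (p : Baire) (n : nat) : Prop := p 0%nat = n.

Definition delta_AN (p : Baire) (A : nat -> Prop) : Prop :=
  forall n, ~ A n <-> exists k, p k = S n.

Record metric_space (M : Type) (d : M -> M -> R) : Prop := {
  ms_nonneg : forall x y, 0 <= d x y;
  ms_zero   : forall x y, d x y = 0 <-> x = y;
  ms_sym    : forall x y, d x y = d y x;
  ms_tri    : forall x y z, d x z <= d x y + d y z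
}.

Definition complete_metric {M : Type} (d : M -> M -> R) : Prop :=
  forall u : nat -> M,
    (forall eps, eps > 0 -> exists N, forall n m, (n >= N)%nat -> (m >= N)%nat ->
       d (u n) (u m) < eps) ->
    exists x, forall eps, eps > 0 -> exists N, forall n, (n >= N)%nat -> d (u n) x < eps.

Definition rat_code (m : nat) (q : R) : Prop :=
  exists a b c, m = cpair a (cpair b c) /\ q = (INR a - INR b) / (INR c + 1).

Definition nnrat_code (m : nat) (r : R) : Prop :=
  exists a c, m = cpair a c /\ r = INR a / (INR c + 1).

Definition computable_metric_space {M : Type} (d : M -> M -> R) (alpha : nat -> M) : Prop :=
  metric_space M d /\
  (forall x eps, eps > 0 -> exists n, d x (alpha n) < eps) /\
  exists e : code, forall i j k, exists m q,
    eval e [i; j; k] m /\ rat_code m q /\ Rabs (q - d (alpha i) (alpha j)) < / 2 ^ k.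

Definition in_ball {M : Type} (d : M -> M -> R) (alpha : nat -> M) (b : nat) (x : M) : Prop :=
  exists n r rr, b = cpair n r /\ nnrat_code r rr /\ d x (alpha n) < rr.

Definition delta_AX {M : Type} (d : M -> M -> R) (alpha : nat -> M)
    (p : Baire) (A : M -> Prop) : Prop :=
  forall x, ~ A x <-> exists k b, p k = S b /\ in_ball d alpha b x.

Definition delta_seq {T : Type} (delta : Baire -> T -> Prop)
    (p : Baire) (A : nat -> T) : Prop :=
  forall i, delta (fun k => p (cpair i k)) (A i).

Definition C_N : mvmap (nat -> Prop) nat :=
  {| mdom := fun A => exists n, A n;
     mval := fun A n => A n |}.

Definition nonempty_interior {M : Type} (d : M -> M -> R) (A : M -> Prop) : Prop :=
  exists x r, r > 0 /\ forall y, d x y < r -> A y.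

Definition BCT {M : Type} (d : M -> M -> R) : mvmap (nat -> (M -> Prop)) nat :=
  {| mdom := fun A => forall x, exists i, A i x;
     mval := fun A n => nonempty_interior d (A n) |}.

(* Main.v *)
Require Import Defs.
From Stdlib Require Import Reals Lra Lia List Arith Cantor Classical ClassicalEpsilon.
Import ListNotations.
Local Open Scope nat_scope.

Definition v (i : nat) (a : list nat) : nat := nth i a 0.
Definition PR (n : nat) (f : list nat -> nat) : Prop :=
  exists c, forall a, length a = n -> eval c a (f a).

Lemma PR_ext n f g : PR n f -> (forall a, length a = n -> f a = g a) -> PR n g.
Proof. intros [c Hc] H. exists c. intros a Ha. rewrite <- H by exact Ha. auto. Qed.

Lemma PR_zero n : PR n (fun _ => 0).
Proof. exists Defs.Zero. intros. constructor. Qed.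

Lemma PR_proj n i : i < n -> PR n (v i).
Proof. intros Hi. exists (Defs.Proj i). intros a Ha. constructor. unfold v.
  apply nth_error_nth'. lia. Qed.

Lemma PR_comp n m f (gs : list (list nat -> nat)) :
  PR m f -> length gs = m -> Forall (PR n) gs ->
  PR n (fun a => f (map (fun g => g a) gs)).
Proof.
  intros [cf Hf] Hl Hgs.
  assert (exists cs, forall a, length a = n -> evals cs a (map (fun g => g a) gs)) as [cs Hcs].
  { clear Hl Hf. induction Hgs as [|g gs [c Hc] _ [cs Hcs]].
    - exists []. intros. constructor.
    - exists (c :: cs). intros a Ha. simpl. constructor; auto. }
  exists (Defs.Comp cf cs). intros a Ha. econstructor. apply Hcs, Ha.
  apply Hf. rewrite length_map. auto.
Qed.

Lemma PR_succ n f : PR n f -> PR n (fun a => S (f a)).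
Proof. intros [c Hc]. exists (Defs.Comp Succ [c]). intros a Ha.
  econstructor. constructor. apply Hc, Ha. constructor. constructor. Qed.

Fixpoint prec (f : list nat -> nat) (g : list nat -> nat) (k : nat) (args : list nat) : nat :=
  match k with 0 => f args | S k => g (k :: prec f g k args :: args) end.

Lemma PR_rec n f g : PR n f -> PR (S (S n)) g -> PR (S n) (fun a => prec f g (v 0 a) (tl a)).
Proof.
  intros [cf Hf] [cg Hg]. exists (Defs.Prec cf cg). intros [|x args] Ha; [discriminate|].
  simpl in Ha. injection Ha as Ha. unfold v; simpl.
  induction x; simpl.
  - constructor. auto.
  - econstructor. exact IHx. apply Hg. simpl. lia.
Qed.

Lemma PR_comp1 n h f : PR 1 h -> PR n f -> PR n (fun a => h [f a]).
Proof. intros Hh Hf. apply (PR_comp n 1 h [f]); auto. Qed.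
Lemma PR_comp2 n h f g : PR 2 h -> PR n f -> PR n g -> PR n (fun a => h [f a; g a]).
Proof. intros Hh Hf Hg. apply (PR_comp n 2 h [f;g]); auto. Qed.
Lemma PR_comp3 n h f g k : PR 3 h -> PR n f -> PR n g -> PR n k -> PR n (fun a => h [f a; g a; k a]).
Proof. intros Hh Hf Hg Hk. apply (PR_comp n 3 h [f;g;k]); auto. Qed.

Lemma len1 (a : list nat) : length a = 1 -> a = [v 0 a].
Proof. destruct a as [|x [|]]; simpl; intros; try discriminate; reflexivity. Qed.
Lemma len2 (a : list nat) : length a = 2 -> a = [v 0 a; v 1 a].
Proof. destruct a as [|x [|y [|]]]; simpl; intros; try discriminate; reflexivity. Qed.
Lemma len3 (a : list nat) : length a = 3 -> a = [v 0 a; v 1 a; v 2 a].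
Proof. destruct a as [|x [|y [|z [|]]]]; simpl; intros; try discriminate; reflexivity. Qed.

Lemma PR_const n c : PR n (fun _ => c).
Proof. induction c. apply PR_zero. apply (PR_succ n (fun _ => c)); auto. Qed.

Definition ite (c x y : nat) : nat := match c with 0 => y | _ => x end.

Lemma PR_ite3 : PR 3 (fun a => ite (v 0 a) (v 1 a) (v 2 a)).
Proof.
  eapply PR_ext. apply (PR_rec 2 (v 1) (v 2)); apply PR_proj; lia.
  intros a Ha. rewrite (len3 a Ha). unfold v; simpl. destruct (nth 0 a 0); reflexivity.
Qed.
Lemma PR_ite n c x y : PR n c -> PR n x -> PR n y -> PR n (fun a => ite (c a) (x a) (y a)).
Proof. intros. apply (PR_comp3 n _ c x y PR_ite3); auto. Qed.

Lemma PR_add2 : PR 2 (fun a => v 0 a + v 1 a).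
Proof.
  eapply PR_ext. apply (PR_rec 1 (v 0) (fun a => S (v 1 a))). apply PR_proj; lia.
  apply PR_succ, PR_proj; lia.
  intros a Ha. rewrite (len2 a Ha). unfold v; simpl. induction (nth 0 a 0); simpl; auto.
Qed.
Lemma PR_add n f g : PR n f -> PR n g -> PR n (fun a => f a + g a).
Proof. intros. apply (PR_comp2 n _ f g PR_add2); auto. Qed.

Lemma PR_mul2 : PR 2 (fun a => v 0 a * v 1 a).
Proof.
  eapply PR_ext. apply (PR_rec 1 (fun _ => 0) (fun a => v 1 a + v 2 a)). apply PR_zero.
  apply PR_add; apply PR_proj; lia.
  intros a Ha. rewrite (len2 a Ha). unfold v; simpl. induction (nth 0 a 0); simpl; auto.
  rewrite IHn. unfold v. simpl. lia.
Qed.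
Lemma PR_mul n f g : PR n f -> PR n g -> PR n (fun a => f a * g a).
Proof. intros. apply (PR_comp2 n _ f g PR_mul2); auto. Qed.

Lemma PR_pred1 : PR 1 (fun a => pred (v 0 a)).
Proof.
  eapply PR_ext. apply (PR_rec 0 (fun _ => 0) (v 0)). apply PR_zero. apply PR_proj; lia.
  intros a Ha. rewrite (len1 a Ha). unfold v; simpl. destruct (nth 0 a 0); reflexivity.
Qed.
Lemma PR_pred n f : PR n f -> PR n (fun a => pred (f a)).
Proof. intros. apply (PR_comp1 n _ f PR_pred1); auto. Qed.

Lemma PR_iter2 h : PR 1 h -> PR 2 (fun a => Nat.iter (v 0 a) (fun z => h [z]) (v 1 a)).
Proof.
  intros Hh. eapply PR_ext. apply (PR_rec 1 (v 0) (fun a => h [v 1 a])). apply PR_proj; lia.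
  apply PR_comp1; auto. apply PR_proj; lia.
  intros a Ha. rewrite (len2 a Ha). unfold v; simpl. induction (nth 0 a 0); simpl; auto.
  rewrite IHn. reflexivity.
Qed.

Lemma PR_sub n f g : PR n f -> PR n g -> PR n (fun a => f a - g a).
Proof.
  intros Hf Hg. eapply PR_ext. apply (PR_comp2 n _ g f (PR_iter2 (fun a => pred (v 0 a)) PR_pred1)); auto.
  intros a _. unfold v; simpl. generalize (f a). induction (g a); intros; simpl.
  lia. rewrite IHn0. lia.
Qed.

Lemma PR_pow2_1 : PR 1 (fun a => 2 ^ v 0 a).
Proof.
  eapply PR_ext. apply (PR_rec 0 (fun _ => 1) (fun a => v 1 a + v 1 a)). apply PR_const.
  apply PR_add; apply PR_proj; lia.
  intros a Ha. rewrite (len1 a Ha). unfold v; simpl. induction (nth 0 a 0); simpl; auto.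
  rewrite IHn. unfold v; simpl. lia.
Qed.
Lemma PR_pow2 n f : PR n f -> PR n (fun a => 2 ^ f a).
Proof. intros Hf. apply (PR_comp1 n _ f PR_pow2_1 Hf). Qed.

Definition tri (w : nat) : nat := nat_rec (fun _ => nat) 0 (fun i m => S i + m) w.
Lemma tri_S w : tri (S w) = S w + tri w. Proof. reflexivity. Qed.
Lemma cpair_tri x y : cpair x y = y + tri (y + x). Proof. reflexivity. Qed.

Lemma PR_tri1 : PR 1 (fun a => tri (v 0 a)).
Proof.
  eapply PR_ext. apply (PR_rec 0 (fun _ => 0) (fun a => S (v 0 a) + v 1 a)). apply PR_const.
  apply PR_add. apply PR_succ, PR_proj; lia. apply PR_proj; lia.
  intros a Ha. rewrite (len1 a Ha). unfold v; simpl. induction (nth 0 a 0); simpl; auto.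
Qed.
Lemma PR_tri n f : PR n f -> PR n (fun a => tri (f a)).
Proof. intros Hf. apply (PR_comp1 n _ f PR_tri1 Hf). Qed.

Lemma PR_cpair n f g : PR n f -> PR n g -> PR n (fun a => cpair (f a) (g a)).
Proof.
  intros Hf Hg. eapply PR_ext. apply PR_add. exact Hg. apply PR_tri, PR_add. exact Hg. exact Hf.
  intros. rewrite cpair_tri. reflexivity.
Qed.
Fixpoint dg (n : nat) : nat :=
  match n with 0 => 0 | S n => ite (tri (S (dg n)) - S n) (dg n) (S (dg n)) end.

Lemma dg_inv n : tri (dg n) <= n < tri (S (dg n)).
Proof.
  induction n. simpl. lia.
  change (dg (S n)) with (ite (tri (S (dg n)) - S n) (dg n) (S (dg n))).
  assert (T1 : tri (S (S (dg n))) = S (S (dg n)) + tri (S (dg n))) by reflexivity.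
  destruct (tri (S (dg n)) - S n) eqn:E; unfold ite; lia.
Qed.

Lemma PR_dg1 : PR 1 (fun a => dg (v 0 a)).
Proof.
  eapply PR_ext. apply (PR_rec 0 (fun _ => 0) (fun a => ite (tri (S (v 1 a)) - S (v 0 a)) (v 1 a) (S (v 1 a)))).
  apply PR_const.
  apply PR_ite. apply PR_sub. apply PR_tri, PR_succ, PR_proj; lia. apply PR_succ, PR_proj; lia.
  apply PR_proj; lia. apply PR_succ, PR_proj; lia.
  intros a Ha. rewrite (len1 a Ha). unfold v; simpl. induction (nth 0 a 0); simpl; auto.
  rewrite IHn. reflexivity.
Qed.
Lemma PR_dg n f : PR n f -> PR n (fun a => dg (f a)).
Proof. intros Hf. apply (PR_comp1 n _ f PR_dg1 Hf). Qed.

Definition cfst (n : nat) : nat := fst (of_nat n).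
Definition csnd (n : nat) : nat := snd (of_nat n).

Lemma of_nat_dg n : of_nat n = (dg n - (n - tri (dg n)), n - tri (dg n)).
Proof.
  pose proof (dg_inv n) as [H1 H2]. rewrite tri_S in H2.
  assert (E : n = cpair (dg n - (n - tri (dg n))) (n - tri (dg n))).
  { rewrite cpair_tri. replace (n - tri (dg n) + (dg n - (n - tri (dg n)))) with (dg n) by lia.
    lia. }
  rewrite E at 1. unfold cpair. apply cancel_of_to.
Qed.

Lemma cfst_pair x y : cfst (cpair x y) = x.
Proof. unfold cfst, cpair. rewrite cancel_of_to. reflexivity. Qed.
Lemma csnd_pair x y : csnd (cpair x y) = y.
Proof. unfold csnd, cpair. rewrite cancel_of_to. reflexivity. Qed.
Lemma cpair_surj n : cpair (cfst n) (csnd n) = n.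
Proof. unfold cfst, csnd, cpair. rewrite <- surjective_pairing. apply cancel_to_of. Qed.

Lemma PR_cfst n f : PR n f -> PR n (fun a => cfst (f a)).
Proof.
  intros Hf. eapply PR_ext. apply PR_sub. apply PR_dg, Hf. apply PR_sub. exact Hf. apply PR_tri, PR_dg, Hf.
  intros. unfold cfst. rewrite of_nat_dg. reflexivity.
Qed.
Lemma PR_csnd n f : PR n f -> PR n (fun a => csnd (f a)).
Proof.
  intros Hf. eapply PR_ext. apply PR_sub. exact Hf. apply PR_tri, PR_dg, Hf.
  intros. unfold csnd. rewrite of_nat_dg. reflexivity.
Qed.

Definition ltail (z : nat) : nat := csnd (z - 1).
Definition lhead (z : nat) : nat := cfst (z - 1).
Definition lookup (j c : nat) : nat := Nat.iter j ltail c.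

Lemma PR_lookup n j c : PR n j -> PR n c -> PR n (fun a => lookup (j a) (c a)).
Proof.
  intros Hj Hc. assert (H1 : PR 1 (fun a => csnd (v 0 a - 1))).
  { apply PR_csnd, PR_sub. apply PR_proj; lia. apply PR_const. }
  eapply PR_ext. apply (PR_comp2 n _ j c (PR_iter2 _ H1)). exact Hj. exact Hc.
  intros. reflexivity.
Qed.
Lemma PR_lhead n c : PR n c -> PR n (fun a => lhead (c a)).
Proof. intros. unfold lhead. apply PR_cfst, PR_sub; auto. apply PR_const. Qed.

Lemma ltail_enc x l : ltail (enc (x :: l)) = enc l.
Proof. unfold ltail. simpl. rewrite Nat.sub_0_r. apply csnd_pair. Qed.
Lemma lhead_enc x l : lhead (enc (x :: l)) = x.
Proof. unfold lhead. simpl. rewrite Nat.sub_0_r. apply cfst_pair. Qed.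
Lemma ltail_0 : ltail 0 = 0.
Proof. reflexivity. Qed.

Lemma lookup_enc j l : lookup j (enc l) = enc (skipn j l).
Proof.
  revert l. induction j; intros l. reflexivity.
  unfold lookup. rewrite Nat.iter_succ_r. destruct l as [|x l].
  - simpl enc. rewrite ltail_0. pose proof (IHj []) as H. rewrite skipn_nil in H. exact H.
  - rewrite ltail_enc. apply IHj.
Qed.

Lemma lookup_prefix (p : Baire) j k :
  (j < k -> lookup j (enc (prefix p k)) <> 0 /\ lhead (lookup j (enc (prefix p k))) = p j) /\
  (k <= j -> lookup j (enc (prefix p k)) = 0).
Proof.
  rewrite lookup_enc. unfold prefix. split.
  - intros Hjk. replace k with (j + S (k - S j)) by lia. rewrite seq_app, map_app.
    rewrite skipn_app. rewrite length_map, length_seq. replace (j - j) with 0 by lia.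
    rewrite skipn_all2 by (rewrite length_map, length_seq; lia). simpl.
    split. discriminate. apply (lhead_enc (p j)).
  - intros Hkj. rewrite skipn_all2. reflexivity. rewrite length_map, length_seq. lia.
Qed.
Lemma comp_of_PR (qf : Baire -> Baire) (phi : list nat -> nat) :
  PR 2 phi ->
  (forall p n k, phi [n; enc (prefix p k)] = 0 \/ phi [n; enc (prefix p k)] = S (qf p n)) ->
  (forall p n, exists k, phi [n; enc (prefix p k)] = S (qf p n)) ->
  computable_pfun (fun p q => q = qf p).
Proof.
  intros [c Hc] H1 H2. split.
  - intros p q1 q2 -> ->. reflexivity.
  - exists c. intros p q ->. split.
    + intros n k. exists (phi [n; enc (prefix p k)]). split. apply Hc. reflexivity. apply H1.
    + intros n. destruct (H2 p n) as [k Hk]. exists k. rewrite <- Hk. apply Hc. reflexivity.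
Qed.

Lemma PR_F3 (F : nat -> nat -> nat -> nat) n x y z :
  PR 3 (fun a => F (v 0 a) (v 1 a) (v 2 a)) -> PR n x -> PR n y -> PR n z ->
  PR n (fun a => F (x a) (y a) (z a)).
Proof. intros HF Hx Hy Hz. apply (PR_comp3 n _ x y z HF); auto. Qed.

Ltac pr := repeat first [ apply PR_const | apply PR_ite | apply PR_lookup | apply PR_lhead
  | apply PR_cfst | apply PR_csnd | apply PR_cpair | apply PR_pow2 | apply PR_add
  | apply PR_mul | apply PR_sub | apply PR_succ | (apply PR_proj; lia)
  | (eapply PR_F3; [eassumption|..]) ].

Lemma lookup_case (p : Baire) j k (X : nat -> nat) (Y : nat) :
  (forall x, X x = 0 -> False) ->
  (ite (lookup j (enc (prefix p k))) (X (lhead (lookup j (enc (prefix p k))))) 0 = 0 \/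
   ite (lookup j (enc (prefix p k))) (X (lhead (lookup j (enc (prefix p k))))) 0 = X (p j)) /\
  ite (lookup j (enc (prefix p (S j)))) (X (lhead (lookup j (enc (prefix p (S j)))))) 0 = X (p j).
Proof.
  intros _. split.
  - destruct (Nat.lt_ge_cases j k) as [H|H].
    + destruct (proj1 (lookup_prefix p j k) H) as [H1 H2]. right.
      destruct (lookup j (enc (prefix p k))); [congruence|]. simpl. rewrite H2. reflexivity.
    + left. rewrite (proj2 (lookup_prefix p j k) H). reflexivity.
  - destruct (proj1 (lookup_prefix p j (S j)) (Nat.lt_succ_diag_r j)) as [H1 H2].
    destruct (lookup j (enc (prefix p (S j)))); [congruence|]. simpl. rewrite H2. reflexivity.
Qed.

Definition qH1 (s : Baire) : Baire := fun _ => cfst (s 1).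
Definition phiH1 (a : list nat) : nat :=
  ite (lookup 1 (v 1 a)) (S (cfst (lhead (lookup 1 (v 1 a))))) 0.
Lemma compH1 : computable_pfun (fun p q => q = qH1 p).
Proof.
  apply (comp_of_PR qH1 phiH1).
  - unfold phiH1. pr.
  - intros p n k. unfold phiH1, v; simpl.
    apply (proj1 (lookup_case p 1 k (fun x => S (cfst x)) 0 (fun x H => ltac:(discriminate)))).
  - intros p n. exists 2. unfold phiH1, v; simpl.
    apply (proj2 (lookup_case p 1 2 (fun x => S (cfst x)) 0 (fun x H => ltac:(discriminate)))).
Qed.

Definition qH2 (s : Baire) : Baire := fun _ => s 1.
Definition phiH2 (a : list nat) : nat :=
  ite (lookup 1 (v 1 a)) (S (lhead (lookup 1 (v 1 a)))) 0.
Lemma compH2 : computable_pfun (fun p q => q = qH2 p).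
Proof.
  apply (comp_of_PR qH2 phiH2).
  - unfold phiH2. pr.
  - intros p n k. unfold phiH2, v; simpl.
    apply (proj1 (lookup_case p 1 k (fun x => S x) 0 (fun x H => ltac:(discriminate)))).
  - intros p n. exists 2. unfold phiH2, v; simpl.
    apply (proj2 (lookup_case p 1 2 (fun x => S x) 0 (fun x H => ltac:(discriminate)))).
Qed.

Definition selK2 (i b vv : nat) : nat := ite ((vv - S i) + (S i - vv)) 0 (S b).
Definition qK2 (p : Baire) : Baire := fun t =>
  selK2 (cfst t) (csnd (csnd t)) (p (cfst (csnd t))).
Definition phiK2 (a : list nat) : nat :=
  ite (lookup (cfst (csnd (v 0 a))) (v 1 a))
    (S (selK2 (cfst (v 0 a)) (csnd (csnd (v 0 a))) (lhead (lookup (cfst (csnd (v 0 a))) (v 1 a))))) 0.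
Lemma compK2 : computable_pfun (fun p q => q = qK2 p).
Proof.
  apply (comp_of_PR qK2 phiK2).
  - unfold phiK2, selK2. pr.
  - intros p n k. unfold phiK2, v; simpl.
    apply (proj1 (lookup_case p _ k (fun x => S (selK2 (cfst n) (csnd (csnd n)) x)) 0 (fun x H => ltac:(discriminate)))).
  - intros p n. exists (S (cfst (csnd n))). unfold phiK2, v; simpl.
    apply (proj2 (lookup_case p (cfst (csnd n)) 0 (fun x => S (selK2 (cfst n) (csnd (csnd n)) x)) 0 (fun x H => ltac:(discriminate)))).
Qed.
Definition test (mq k a' c' : nat) : nat :=
  ite (S (cfst mq * S c' * 2 ^ k + S (csnd (csnd mq)) * S c')
       - (a' * S (csnd (csnd mq)) * 2 ^ k + cfst (csnd mq) * S c' * 2 ^ k)) 0 1.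

Definition qcore (F : nat -> nat -> nat -> nat) (vv t : nat) : nat :=
 ite (cfst (csnd (csnd (cfst t))))
   (ite vv
     (ite (test (F (cfst (csnd t)) (cfst (csnd (cfst t))) (cfst (csnd (csnd (csnd t)))))
                (cfst (csnd (csnd (csnd t)))) (cfst (csnd (csnd (cfst t)))) (csnd (csnd (csnd (cfst t)))))
        (ite (test (F (cfst (csnd t)) (cfst (vv - 1)) (csnd (csnd (csnd (csnd t)))))
                   (csnd (csnd (csnd (csnd t)))) (cfst (csnd (vv - 1))) (csnd (csnd (vv - 1))))
           (S (cfst t)) 0)
        0)
     0)
   (S (cfst t)).

Definition kpos (t : nat) : nat := cpair (cfst (cfst t)) (cfst (csnd (csnd t))).
Definition qK1 F (p : Baire) : Baire := fun t => qcore F (p (kpos t)) t.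
Definition phiK1 F (a : list nat) : nat :=
  ite (cfst (csnd (csnd (cfst (v 0 a)))))
    (ite (lookup (kpos (v 0 a)) (v 1 a)) (S (qcore F (lhead (lookup (kpos (v 0 a)) (v 1 a))) (v 0 a))) 0)
    (S (qcore F 0 (v 0 a))).

Lemma compK1 F : PR 3 (fun a => F (v 0 a) (v 1 a) (v 2 a)) ->
  computable_pfun (fun p q => q = qK1 F p).
Proof.
  intros HF. apply (comp_of_PR (qK1 F) (phiK1 F)).
  - unfold phiK1, qcore, test, kpos. pr.
  - intros p n k. unfold phiK1, qK1, v; simpl.
    destruct (cfst (csnd (csnd (cfst n)))) eqn:E.
    + simpl. right. unfold qcore. rewrite E. reflexivity.
    + change (ite (S n0) ?x ?y) with x.
      apply (proj1 (lookup_case p _ k (fun x => S (qcore F x n)) 0 (fun x H => ltac:(discriminate)))).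
  - intros p n. exists (S (kpos n)). unfold phiK1, qK1, v; simpl.
    destruct (cfst (csnd (csnd (cfst n)))) eqn:E.
    + simpl. unfold qcore. rewrite E. reflexivity.
    + change (ite (S n0) ?x ?y) with x.
      apply (proj2 (lookup_case p (kpos n) 0 (fun x => S (qcore F x n)) 0 (fun x H => ltac:(discriminate)))).
Qed.
Local Open Scope R_scope.

Lemma pow2_pos k : 0 < 2 ^ k.
Proof. apply pow_lt. lra. Qed.

Lemma small_pow eps : eps > 0 -> exists N, forall n, (n >= N)%nat -> / 2 ^ n < eps.
Proof.
  intros He. destruct (pow_lt_1_zero (/2) ltac:(rewrite Rabs_pos_eq; lra) eps He) as [N HN].
  exists N. intros n Hn. specialize (HN n Hn). rewrite pow_inv in HN.
  rewrite Rabs_pos_eq in HN. exact HN. left. apply Rinv_0_lt_compat, pow2_pos.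
Qed.

Lemma pow_inv_mono n m : (n <= m)%nat -> / 2 ^ m <= / 2 ^ n.
Proof.
  intros H. apply Rinv_le_contravar. apply pow2_pos. apply Rle_pow. lra. exact H.
Qed.

Definition ratv (m : nat) : R :=
  (INR (cfst m) - INR (cfst (csnd m))) / (INR (csnd (csnd m)) + 1).

Lemma rat_code_ratv m q : rat_code m q -> q = ratv m.
Proof.
  intros (a & b & c & -> & ->). unfold ratv. rewrite cfst_pair, csnd_pair, cfst_pair, csnd_pair.
  reflexivity.
Qed.

Lemma INR_S1 n : INR (S n) = INR n + 1.
Proof. apply S_INR. Qed.

Lemma test_iff m k a' c' :
  test m k a' c' <> 0%nat <-> ratv m + / 2 ^ k < INR a' / (INR c' + 1).
Proof.
  unfold test, ratv.
  set (A := cfst m). set (B := cfst (csnd m)). set (C := csnd (csnd m)).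
  assert (Hn : test m k a' c' <> 0%nat <->
     (A * S c' * 2 ^ k + S C * S c' < a' * S C * 2 ^ k + B * S c' * 2 ^ k)%nat).
  { unfold test. fold A B C.
    destruct (S (A * S c' * 2 ^ k + S C * S c') - (a' * S C * 2 ^ k + B * S c' * 2 ^ k))%nat eqn:E;
    simpl; split; intros; try lia; congruence. }
  unfold test in Hn. fold A B C in Hn. rewrite Hn. clear Hn.
  assert (Hu : 0 < INR C + 1) by (pose proof (pos_INR C); lra).
  assert (Hw : 0 < INR c' + 1) by (pose proof (pos_INR c'); lra).
  pose proof (pow2_pos k) as HP.
  assert (E : forall X Y, X < Y <-> X * ((INR C + 1) * (INR c' + 1) * 2 ^ k) < Y * ((INR C + 1) * (INR c' + 1) * 2 ^ k)).
  { intros X Y. split; intro H. apply Rmult_lt_compat_r; auto. apply Rmult_lt_0_compat; auto.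
    apply Rmult_lt_0_compat; auto.
    eapply Rmult_lt_reg_r; [|exact H]. apply Rmult_lt_0_compat; auto. apply Rmult_lt_0_compat; auto. }
  rewrite E.
  replace (((INR A - INR B) / (INR C + 1) + / 2 ^ k) * ((INR C + 1) * (INR c' + 1) * 2 ^ k))
    with ((INR A - INR B) * (INR c' + 1) * 2 ^ k + (INR C + 1) * (INR c' + 1)) by (field; lra).
  replace (INR a' / (INR c' + 1) * ((INR C + 1) * (INR c' + 1) * 2 ^ k))
    with (INR a' * (INR C + 1) * 2 ^ k) by (field; lra).
  split; intro H.
  - apply lt_INR in H. rewrite !plus_INR, !mult_INR, !pow_INR, !INR_S1 in H.
    replace (INR 0 + 1 + 1) with 2 in H by (simpl; ring). lra.
  - apply INR_lt. rewrite !plus_INR, !mult_INR, !pow_INR, !INR_S1.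
    replace (INR 0 + 1 + 1) with 2 by (simpl; ring). lra.
Qed.

Lemma approx_iff (D : R) (Qf : nat -> R) (R0 : R) :
  (forall k, Rabs (Qf k - D) < / 2 ^ k) ->
  ((exists k, Qf k + / 2 ^ k < R0) <-> D < R0).
Proof.
  intros HQ. split.
  - intros [k Hk]. specialize (HQ k). apply Rabs_def2 in HQ. lra.
  - intros H. destruct (small_pow ((R0 - D) / 2) ltac:(lra)) as [N HN].
    exists N. specialize (HN N (le_n N)). specialize (HQ N). apply Rabs_def2 in HQ. lra.
Qed.
Lemma baire (M : Type) (d : M -> M -> R) (Hms : metric_space M d) (Hc : complete_metric d)
  (A : nat -> M -> Prop) :
  (forall i y, ~ A i y -> exists s, s > 0 /\ forall z, d z y < s -> ~ A i z) ->
  (forall x, exists i, A i x) -> inhabited M ->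
  exists i x r, r > 0 /\ forall y, d x y < r -> A i y.
Proof.
  intros Hopen Hcov [x0]. apply NNPP. intros Hno.
  assert (Hni : forall i x r, r > 0 -> exists y, d x y < r /\ ~ A i y).
  { intros i x r Hr. apply NNPP. intros Hn. apply Hno. exists i, x, r. split; auto.
    intros y Hy. apply NNPP. intros HA. apply Hn. exists y. auto. }
  assert (Hstep : forall i (xr : M * R), exists xr' : M * R, snd xr > 0 ->
     snd xr' > 0 /\ d (fst xr') (fst xr) + snd xr' <= snd xr /\ snd xr' <= snd xr / 2 /\
     forall z, d z (fst xr') <= snd xr' -> ~ A i z).
  { intros i [x r]. destruct (classic (r > 0)) as [Hr|Hr].
    - destruct (Hni i x (r / 2) ltac:(lra)) as [y [Hy HA]].
      destruct (Hopen i y HA) as [s [Hs Hs']].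
      exists (y, Rmin (r / 2) (s / 2)). simpl. intros _.
      pose proof (Rmin_l (r/2) (s/2)). pose proof (Rmin_r (r/2) (s/2)).
      rewrite (ms_sym _ _ Hms y x).
      split. apply Rmin_pos; lra. split. lra. split. lra.
      intros z Hz. apply Hs'. lra.
    - exists (x, r). simpl. intros H. contradiction. }
  set (stp := fun i xr => proj1_sig (constructive_indefinite_description _ (Hstep i xr))).
  assert (Hstp : forall i xr, snd xr > 0 -> snd (stp i xr) > 0 /\
     d (fst (stp i xr)) (fst xr) + snd (stp i xr) <= snd xr /\ snd (stp i xr) <= snd xr / 2 /\
     forall z, d z (fst (stp i xr)) <= snd (stp i xr) -> ~ A i z).
  { intros i xr. unfold stp. destruct (constructive_indefinite_description _ _) as [y Hy]. exact Hy. }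
  set (sq := fix sq (n : nat) : M * R := match n with S n => stp n (sq n) | _ => (x0, 1) end).
  assert (Hpos : forall n, snd (sq n) > 0 /\ snd (sq n) <= / 2 ^ n).
  { induction n. simpl. lra. destruct IHn as [H1 H2]. change (sq (S n)) with (stp n (sq n)).
    destruct (Hstp n (sq n) H1) as (H3 & H4 & H5 & H6). split. auto.
    simpl. rewrite Rinv_mult. lra. }
  assert (Hnest : forall n k, d (fst (sq (n + k)%nat)) (fst (sq n)) + snd (sq (n + k)%nat) <= snd (sq n)).
  { intros n k. induction k.
    - rewrite Nat.add_0_r. rewrite (proj2 (ms_zero _ _ Hms _ _) eq_refl). lra.
    - rewrite Nat.add_succ_r. change (sq (S (n + k))) with (stp (n + k)%nat (sq (n + k)%nat)).
      destruct (Hstp (n + k)%nat (sq (n + k)%nat) (proj1 (Hpos _))) as (H3 & H4 & H5 & H6).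
      pose proof (ms_tri _ _ Hms (fst (stp (n + k)%nat (sq (n + k)%nat))) (fst (sq (n + k)%nat)) (fst (sq n))).
      lra. }
  assert (Hdist : forall n m, (n <= m)%nat -> d (fst (sq m)) (fst (sq n)) < snd (sq n)).
  { intros n m Hnm. replace m with (n + (m - n))%nat by lia.
    pose proof (Hnest n (m - n)%nat). pose proof (proj1 (Hpos (n + (m - n))%nat)). lra. }
  destruct (Hc (fun n => fst (sq n))) as [x Hx].
  { intros eps He. destruct (small_pow eps He) as [N HN]. exists N. intros n m Hn Hm.
    destruct (Nat.le_ge_cases n m) as [H|H].
    - rewrite (ms_sym _ _ Hms). pose proof (Hdist n m H). pose proof (proj2 (Hpos n)).
      pose proof (HN n Hn). lra.
    - pose proof (Hdist m n H). pose proof (proj2 (Hpos m)). pose proof (HN m Hm). lra. }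
  assert (Hlim : forall n, d x (fst (sq n)) <= snd (sq n)).
  { intros n. apply Rnot_lt_le. intros Hlt.
    destruct (Hx (d x (fst (sq n)) - snd (sq n)) ltac:(lra)) as [N HN].
    specialize (HN (Nat.max N n) (Nat.le_max_l _ _)).
    pose proof (Hdist n (Nat.max N n) (Nat.le_max_r _ _)).
    pose proof (ms_tri _ _ Hms x (fst (sq (Nat.max N n))) (fst (sq n))).
    rewrite (ms_sym _ _ Hms x (fst (sq (Nat.max N n)))) in H0. lra. }
  destruct (Hcov x) as [i Hi].
  destruct (Hstp i (sq i) (proj1 (Hpos i))) as (_ & _ & _ & H6).
  apply (H6 x). apply (Hlim (S i)). exact Hi.
Qed.
Lemma small_inr eps : eps > 0 -> exists c, INR 1 / (INR c + 1) < eps.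
Proof.
  intros He. destruct (small_pow eps He) as [N HN]. specialize (HN N (le_n N)).
  exists (2 ^ N - 1)%nat.
  assert (H1 : (2 ^ N <> 0)%nat) by (apply Nat.pow_nonzero; lia).
  rewrite <- S_INR. replace (S (2 ^ N - 1)) with (2 ^ N)%nat by lia.
  rewrite pow_INR. replace (INR 2) with 2 by (simpl; ring). simpl INR. lra.
Qed.

Ltac cp := repeat (first [rewrite cfst_pair | rewrite csnd_pair]).
Ltac cpH H := repeat (first [rewrite cfst_pair in H | rewrite csnd_pair in H]).

Lemma ite_nz c x y : c <> 0%nat -> ite c x y = x.
Proof. destruct c; simpl; congruence. Qed.
Lemma ite_z x y : ite 0 x y = y.
Proof. reflexivity. Qed.

Lemma qcore_eq F vv i a a' c' m j k1 k2 :
 qcore F vv (cpair (cpair i (cpair a (cpair a' c'))) (cpair m (cpair j (cpair k1 k2)))) =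
 ite a' (ite vv (ite (test (F m a k1) k1 a' c')
   (ite (test (F m (cfst (vv - 1)) k2) k2 (cfst (csnd (vv - 1))) (csnd (csnd (vv - 1))))
     (S (cpair i (cpair a (cpair a' c')))) 0%nat) 0%nat) 0%nat) (S (cpair i (cpair a (cpair a' c')))).
Proof. unfold qcore. cp. reflexivity. Qed.

Lemma kpos_eq i a a' c' m j k1 k2 :
  kpos (cpair (cpair i (cpair a (cpair a' c'))) (cpair m (cpair j (cpair k1 k2)))) = cpair i j.
Proof. unfold kpos. cp. reflexivity. Qed.

Lemma decomp_t t : exists i a a' c' m j k1 k2,
  t = cpair (cpair i (cpair a (cpair a' c'))) (cpair m (cpair j (cpair k1 k2))).
Proof.
  exists (cfst (cfst t)), (cfst (csnd (cfst t))), (cfst (csnd (csnd (cfst t)))), (csnd (csnd (csnd (cfst t)))),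
    (cfst (csnd t)), (cfst (csnd (csnd t))), (cfst (csnd (csnd (csnd t)))), (csnd (csnd (csnd (csnd t)))).
  rewrite !cpair_surj. reflexivity.
Qed.

Lemma ball_decomp (M : Type) (d : M -> M -> R) (alpha : nat -> M) b x :
  in_ball d alpha b x <->
  d x (alpha (cfst b)) < INR (cfst (csnd b)) / (INR (csnd (csnd b)) + 1).
Proof.
  split.
  - intros (n & r & rr & -> & (a & c & -> & ->) & H). cp. exact H.
  - intros H. exists (cfst b), (csnd b), (INR (cfst (csnd b)) / (INR (csnd (csnd b)) + 1)).
    split. symmetry. apply cpair_surj. split; auto.
    exists (cfst (csnd b)), (csnd (csnd b)). split; auto. symmetry. apply cpair_surj.
Qed.

Lemma dir2 (M : Type) (d : M -> M -> R) (alpha : nat -> M) (Hms : metric_space M d)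
  (Hdense : forall x eps, eps > 0 -> exists n, d x (alpha n) < eps) :
  weihrauch_le delta_AN delta_nat C_N (delta_seq (delta_AX d alpha)) delta_nat (BCT d).
Proof.
  exists (fun s r => r = qH2 s), (fun p q => q = qK2 p). split. apply compH2. split. apply compK2.
  intros G [HGf HG]. split.
  - intros p r1 r2 (k1 & g1 & Hk1 & Hg1 & Hh1) (k2 & g2 & Hk2 & Hg2 & Hh2). subst k1 k2.
    rewrite (HGf _ _ _ Hg1 Hg2) in Hh1. congruence.
  - intros p A HpA [i0 Hi0].
    set (As := fun (i : nat) (x : M) => A i).
    assert (Hname : delta_seq (delta_AX d alpha) (qK2 p) As).
    { intros i x. unfold As. split.
      - intros HnA. destruct (proj1 (HpA i) HnA) as [j Hj].
        destruct (Hdense x 1 ltac:(lra)) as [n Hn].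
        exists (cpair j (cpair n (cpair 1 0))), (cpair n (cpair 1 0)). split.
        + unfold qK2, selK2. cp. rewrite Hj.
          rewrite Nat.sub_diag. reflexivity.
        + apply ball_decomp. cp. simpl INR. lra.
      - intros (k & b & Hk & _). apply HpA. exists (cfst k).
        unfold qK2, selK2 in Hk. cpH Hk.
        destruct (p (cfst k) - S i + (S i - p (cfst k)))%nat eqn:E. lia. simpl in Hk. discriminate. }
    destruct (HG (qK2 p) As Hname (fun x => ex_intro _ i0 Hi0)) as (g & Hg & n & Hn & Hint).
    exists (qH2 (bpair p g)). split.
    + exists (qK2 p), g. auto.
    + exists n. split.
      * unfold delta_nat, qH2, bpair. simpl. exact Hn.
      * destruct Hint as (x & r & Hr & Hin). apply (Hin x). simpl.
        rewrite (proj2 (ms_zero _ _ Hms x x) eq_refl). lra.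
Qed.
Lemma cpair_inj x y x' y' : cpair x y = cpair x' y' -> x = x' /\ y = y'.
Proof. intros H. unfold cpair in H. apply to_nat_inj in H. injection H. auto. Qed.

Lemma dir1 (M : Type) (d : M -> M -> R) (alpha : nat -> M) (Hms : metric_space M d)
  (Hc : complete_metric d)
  (Hdense : forall x eps, eps > 0 -> exists n, d x (alpha n) < eps) (Hne : inhabited M)
  (F : nat -> nat -> nat -> nat) (HF : PR 3 (fun a => F (v 0 a) (v 1 a) (v 2 a)))
  (HFa : forall i j k, Rabs (ratv (F i j k) - d (alpha i) (alpha j)) < / 2 ^ k) :
  weihrauch_le (delta_seq (delta_AX d alpha)) delta_nat (BCT d) delta_AN delta_nat C_N.
Proof.
  exists (fun s r => r = qH1 s), (fun p q => q = qK1 F p). split. apply compH1. split. apply compK1, HF.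
  intros G [HGf HG]. split.
  - intros p r1 r2 (k1 & g1 & Hk1 & Hg1 & Hh1) (k2 & g2 & Hk2 & Hg2 & Hh2). subst k1 k2.
    rewrite (HGf _ _ _ Hg1 Hg2) in Hh1. congruence.
  - intros p A HpA Hcov.
    set (q := qK1 F p).
    set (Sset := fun n => ~ exists t, q t = S n).
    assert (Hname : delta_AN q Sset).
    { intros n. unfold Sset. split. intro H. apply NNPP, H. intros H1 H2. auto. }
    assert (Hq : forall i j a' c', (exists k, test (F i j k) k a' c' <> 0%nat) <->
                   d (alpha i) (alpha j) < INR a' / (INR c' + 1)).
    { intros i j a' c'.
      pose proof (approx_iff (d (alpha i) (alpha j)) (fun k => ratv (F i j k)) (INR a' / (INR c' + 1)) (HFa i j)) as E.
      split.
      - intros [k Hk]. apply E. exists k. apply test_iff. exact Hk.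
      - intros H. destruct (proj2 E H) as [k Hk]. exists k. apply test_iff. exact Hk. }
    assert (HpA' : forall i y, ~ A i y <-> exists j b, p (cpair i j) = S b /\
                 d y (alpha (cfst b)) < INR (cfst (csnd b)) / (INR (csnd (csnd b)) + 1)).
    { intros i y. rewrite (HpA i y). split.
      - intros (j & b & Hb & Hball). exists j, b. split. exact Hb. apply ball_decomp. exact Hball.
      - intros (j & b & Hb & Hball). exists j, b. split. exact Hb. apply ball_decomp. exact Hball. }
    assert (sound : forall i a a' c', Sset (cpair i (cpair a (cpair a' c'))) -> nonempty_interior d (A i)).
    { intros i a a' c' HS.
      assert (Ha' : a' <> 0%nat).
      { intro E; subst a'. apply HS.
        exists (cpair (cpair i (cpair a (cpair 0 c'))) (cpair 0 (cpair 0 (cpair 0 0)))).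
        unfold q, qK1. rewrite qcore_eq. reflexivity. }
      assert (Hc0 : 0 < INR c' + 1) by (pose proof (pos_INR c'); lra).
      exists (alpha a), (INR a' / (INR c' + 1)). split.
      { apply Rdiv_lt_0_compat; auto. apply lt_0_INR. lia. }
      intros y Hy. apply NNPP. intros HnA.
      destruct (proj1 (HpA' i y) HnA) as (j & b & Hb & Hball).
      set (n2 := cfst b) in *. set (a2 := cfst (csnd b)) in *. set (c2 := csnd (csnd b)) in *.
      set (eps := Rmin (INR a' / (INR c' + 1) - d (alpha a) y) (INR a2 / (INR c2 + 1) - d y (alpha n2))).
      assert (Heps : eps > 0) by (apply Rmin_pos; lra).
      destruct (Hdense y eps Heps) as [m Hm].
      pose proof (Rmin_l (INR a' / (INR c' + 1) - d (alpha a) y) (INR a2 / (INR c2 + 1) - d y (alpha n2))).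
      pose proof (Rmin_r (INR a' / (INR c' + 1) - d (alpha a) y) (INR a2 / (INR c2 + 1) - d y (alpha n2))).
      fold eps in H, H0.
      assert (d1 : d (alpha m) (alpha a) < INR a' / (INR c' + 1)).
      { pose proof (ms_tri _ _ Hms (alpha m) y (alpha a)). rewrite (ms_sym _ _ Hms (alpha m) y) in H1.
        rewrite (ms_sym _ _ Hms y (alpha a)) in H1. lra. }
      assert (d2 : d (alpha m) (alpha n2) < INR a2 / (INR c2 + 1)).
      { pose proof (ms_tri _ _ Hms (alpha m) y (alpha n2)). rewrite (ms_sym _ _ Hms (alpha m) y) in H1. lra. }
      destruct (proj2 (Hq m a a' c') d1) as [k1 Hk1].
      destruct (proj2 (Hq m n2 a2 c2) d2) as [k2 Hk2].
      apply HS. exists (cpair (cpair i (cpair a (cpair a' c'))) (cpair m (cpair j (cpair k1 k2)))).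
      unfold q, qK1. rewrite kpos_eq, Hb, qcore_eq.
      replace (S b - 1)%nat with b by lia.
      rewrite (ite_nz a') by exact Ha'. rewrite (ite_nz (S b)) by discriminate.
      rewrite (ite_nz (test (F m a k1) k1 a' c')) by exact Hk1.
      rewrite (ite_nz (test (F m (cfst b) k2) k2 (cfst (csnd b)) (csnd (csnd b)))) by exact Hk2.
      reflexivity. }
    assert (Hopen : forall i y, ~ A i y -> exists s, s > 0 /\ forall z, d z y < s -> ~ A i z).
    { intros i y HnA. destruct (proj1 (HpA' i y) HnA) as (j & b & Hb & Hball).
      exists (INR (cfst (csnd b)) / (INR (csnd (csnd b)) + 1) - d y (alpha (cfst b))). split. lra.
      intros z Hz. apply HpA'. exists j, b. split. exact Hb.
      pose proof (ms_tri _ _ Hms z y (alpha (cfst b))). lra. }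
    assert (nonempty : exists n, Sset n).
    { destruct (baire M d Hms Hc A Hopen Hcov Hne) as (i & x & r & Hr & Hin).
      destruct (Hdense x (r / 2) ltac:(lra)) as [a Ha].
      destruct (small_inr (r / 2) ltac:(lra)) as [c' Hc'].
      exists (cpair i (cpair a (cpair 1 c'))). intros [t Ht].
      destruct (decomp_t t) as (i0 & a0 & a0' & c0' & m & j & k1 & k2 & ->).
      unfold q, qK1 in Ht. rewrite kpos_eq, qcore_eq in Ht.
      destruct a0' as [|a0''].
      { rewrite ite_z in Ht. injection Ht as Ht.
        apply cpair_inj in Ht as [_ Ht]. apply cpair_inj in Ht as [_ Ht]. apply cpair_inj in Ht as [Ht _].
        discriminate. }
      rewrite (ite_nz (S a0'')) in Ht by discriminate.
      destruct (p (cpair i0 j)) as [|b] eqn:Hb.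
      { rewrite ite_z in Ht. discriminate. }
      rewrite (ite_nz (S b)) in Ht by discriminate. replace (S b - 1)%nat with b in Ht by lia.
      destruct (test (F m a0 k1) k1 (S a0'') c0') as [|t1] eqn:T1.
      { rewrite ite_z in Ht. discriminate. }
      rewrite (ite_nz (S t1)) in Ht by discriminate.
      destruct (test (F m (cfst b) k2) k2 (cfst (csnd b)) (csnd (csnd b))) as [|t2] eqn:T2.
      { rewrite ite_z in Ht. discriminate. }
      rewrite (ite_nz (S t2)) in Ht by discriminate.
      injection Ht as Ht.
      apply cpair_inj in Ht as [E1 Ht]. apply cpair_inj in Ht as [E2 Ht]. apply cpair_inj in Ht as [E3 E4].
      subst i0 a0 c0'. rewrite E3 in T1.
      assert (d1 : d (alpha m) (alpha a) < INR 1 / (INR c' + 1)).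
      { apply Hq. exists k1. rewrite T1. discriminate. }
      assert (d2 : d (alpha m) (alpha (cfst b)) < INR (cfst (csnd b)) / (INR (csnd (csnd b)) + 1)).
      { apply Hq. exists k2. rewrite T2. discriminate. }
      apply (proj2 (HpA' i (alpha m))). exists j, b. auto.
      apply Hin. pose proof (ms_tri _ _ Hms x (alpha a) (alpha m)).
      rewrite (ms_sym _ _ Hms (alpha a) (alpha m)) in H. lra. }
    destruct nonempty as [n Hn].
    destruct (HG q Sset Hname (ex_intro _ n Hn)) as (g & Hg & n' & Hn' & HS).
    exists (qH1 (bpair p g)). split.
    + exists q, g. auto.
    + exists (cfst n'). split.
      * unfold delta_nat, qH1, bpair. simpl. rewrite Hn'. reflexivity.
      * simpl. apply (sound (cfst n') (cfst (csnd n')) (cfst (csnd (csnd n'))) (csnd (csnd (csnd n')))).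
        rewrite !cpair_surj. exact HS.
Qed.

Theorem theorem5p2 (M : Type) (d : M -> M -> R) (alpha : nat -> M)
  (Hcms : computable_metric_space d alpha)
  (Hcomplete : complete_metric d)
  (Hne : inhabited M) :
  weihrauch_eq (delta_seq (delta_AX d alpha)) delta_nat (BCT d)
               delta_AN delta_nat C_N.
Proof.
  destruct Hcms as (Hms & Hdense & e & He).
  assert (He' : forall ijk : nat * nat * nat, exists m, eval e [fst (fst ijk); snd (fst ijk); snd ijk] m /\
     Rabs (ratv m - d (alpha (fst (fst ijk))) (alpha (snd (fst ijk)))) < / 2 ^ (snd ijk)).
  { intros [[i j] k]. simpl. destruct (He i j k) as (m & q & H1 & H2 & H3). exists m. split. exact H1.
    rewrite <- (rat_code_ratv m q H2). exact H3. }
  set (F := fun i j k => proj1_sig (constructive_indefinite_description _ (He' (i, j, k)))).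
  assert (HFs : forall i j k, eval e [i; j; k] (F i j k) /\
     Rabs (ratv (F i j k) - d (alpha i) (alpha j)) < / 2 ^ k).
  { intros i j k. unfold F. destruct (constructive_indefinite_description _ _) as [m Hm]. exact Hm. }
  assert (HF : PR 3 (fun a => F (v 0 a) (v 1 a) (v 2 a))).
  { exists e. intros a Ha. rewrite (len3 a Ha) at 1. apply HFs. }
  split.
  - apply (dir1 M d alpha Hms Hcomplete Hdense Hne F HF). intros. apply HFs.
  - apply (dir2 M d alpha Hms Hdense).
Qed.
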